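(* Let $L>0$ be fixed, $c_{cr}=4/L^2$, and let the constant renormalized force be $F=cN$ with $c>c_{cr}$. Then for all sufficiently large $N$ the fixed point satisfies $x_N>-L$, and $x_N\to-\frac{2}{\sqrt c}$ as $N\to\infty$. The density $\rho$ of the fixed points exists, vanishes on $[-L,-\frac2{\sqrt c})$, and is not constant on $(-\frac2{\sqrt c},0)$.
   Context: A configuration consists of $N+1$ point particles $-L\le x_N<\dots<x_1<x_0\le 0$ on $[-L,0]$ with potential energy $U=\sum_{i=1}^{N}\frac{\alpha_{int}}{x_{i-1}-x_i}-\sum_{i=0}^{N}\int_{-L}^{x_i}\alpha_{ext}F_0\,dx$, $\alpha_{int},\alpha_{ext}>0$, with constant $F_0>0$; the renormalized force is the constant $F=\frac{\alpha_{ext}}{\alpha_{int}}F_0$, which may depend on $N$ (the external force pushes particles towards $0$). Write $\delta_k=x_{k-1}-x_k$, $f_k=\delta_k^{-2}$. The walls at $0,-L$ are completely inelastic. A fixed point is a configuration with $x_0=0$, $f_{k+1}+F=f_k$ for $k=1,\dots,N-1$, and either $x_N=-L$ with $f_N\ge F$, or $x_N>-L$ with $f_N=F$; it exists and is unique. The density $\rho$ of the fixed points (as $N\to\infty$) is a function on $[-L,0]$ such that for every subinterval $I\subset[-L,0]$, $\int_I\rho(x)\,dx=\lim_{N\to\infty}\frac{\#\{i:x_i\in I\}}{N}$. *)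

(* Defs.v *)
From Stdlib Require Import Reals Lra Lia.
Open Scope R_scope.

(* A configuration of N+1 particles is x : nat -> R; only x 0, ..., x N matter. *)

Definition delta (x : nat -> R) (k : nat) : R := x (Nat.pred k) - x k.

Definition fk (x : nat -> R) (k : nat) : R := / (delta x k ^ 2).

Definition admissible (N : nat) (L : R) (x : nat -> R) : Prop :=
  -L <= x N /\ x 0%nat <= 0 /\ (forall i : nat, (i < N)%nat -> x (S i) < x i).

Definition is_fixed_point (N : nat) (L F : R) (x : nat -> R) : Prop :=
  admissible N L x /\
  x 0%nat = 0 /\
  (forall k : nat, (1 <= k)%nat -> (k <= N - 1)%nat -> fk x (S k) + F = fk x k) /\
  ((x N = -L /\ fk x N >= F) \/ (x N > -L /\ fk x N = F)).

(* Membership in an interval with endpoints a <= b; la / rb say whether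
   the left / right endpoint is included. *)
Definition in_interval (a b : R) (la rb : bool) (y : R) : bool :=
  (if la then (if Rle_dec a y then true else false)
         else (if Rlt_dec a y then true else false)) &&
  (if rb then (if Rle_dec y b then true else false)
         else (if Rlt_dec y b then true else false)).

Definition count_in (N : nat) (x : nat -> R) (a b : R) (la rb : bool) : R :=
  sum_f_R0 (fun i => if in_interval a b la rb (x i) then 1 else 0) N.

(* rho is a density of the family of configurations xs (xs N has N+1 particles):
   for every nondegenerate subinterval I of [-L,0] (open, closed or half-open),
   rho is Riemann integrable on I and its integral equals
   lim_{N -> oo} #{i : x_i in I} / N. *)
Definition is_density (L : R) (xs : nat -> nat -> R) (rho : R -> R) : Prop :=
  forall a b : R, -L <= a -> a < b -> b <= 0 ->
    exists pr : Riemann_integrable rho a b,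
      forall la rb : bool,
        Un_cv (fun N => count_in N (xs N) a b la rb / INR N) (RiemannInt pr).

(* Main.v *)
Require Import Defs.
From Stdlib Require Import Reals.
Open Scope R_scope.
From Stdlib Require Import Lra Lia.


Definition cnt (N : nat) (g : nat -> bool) : R :=
  sum_f_R0 (fun i => if g i then 1 else 0) N.

Lemma cnt_ge0 g N : 0 <= cnt N g.
Proof.
  unfold cnt; induction N; simpl; destruct (g _); lra.
Qed.

Lemma cntA g N : forall p q, (forall i, (i <= N)%nat -> g i = true -> p <= INR i <= q) ->
  cnt N g <= Rmax 0 (q - p + 1).
Proof.
  induction N; intros p q H; unfold cnt; [simpl|rewrite tech5].
  - destruct (g 0%nat) eqn:E.
    + specialize (H 0%nat (le_n _) E). simpl in H. unfold Rmax; destruct (Rle_dec _ _); lra.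
    + unfold Rmax; destruct (Rle_dec _ _); lra.
  - fold (cnt N g). destruct (g (S N)) eqn:E.
    + pose proof (H (S N) (le_n _) E) as HS. rewrite S_INR in HS.
      assert (IH := IHN p (INR N)).
      assert (cnt N g <= Rmax 0 (INR N - p + 1)).
      { apply IH. intros i Hi Gi. assert (Hs := H i ltac:(lia) Gi).
        apply le_INR in Hi. lra. }
      revert H0; unfold Rmax; repeat destruct (Rle_dec _ _); lra.
    + rewrite Rplus_0_r. apply IHN. intros i Hi Gi. apply H; auto.
Qed.

Lemma cntB g N : forall p q, 0 <= p -> (forall i, (i <= N)%nat -> p < INR i < q -> g i = true) ->
  Rmin (q - 1) (INR N) - p <= cnt N g.
Proof.
  induction N; intros p q Hp H; unfold cnt; [simpl|rewrite tech5].
  - destruct (g 0%nat); unfold Rmin; destruct (Rle_dec _ _); lra.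
  - fold (cnt N g). assert (IH := IHN p q Hp ltac:(intros i Hi Hi'; apply H; auto)).
    pose proof (cnt_ge0 g N).
    destruct (g (S N)) eqn:E.
    + revert IH; try rewrite S_INR; unfold Rmin; repeat destruct (Rle_dec _ _); lra.
    + rewrite Rplus_0_r.
      destruct (Rlt_dec p (INR (S N))) as [h1|h1]; [destruct (Rlt_dec (INR (S N)) q) as [h2|h2]|].
      * rewrite (H (S N) (le_n _) (conj h1 h2)) in E; discriminate.
      * revert IH h1 h2; rewrite S_INR; unfold Rmin; repeat destruct (Rle_dec _ _); lra.
      * revert IH h1; rewrite S_INR; unfold Rmin; repeat destruct (Rle_dec _ _); lra.
Qed.

Lemma inint1 a b la rb y : in_interval a b la rb y = true -> a <= y <= b.
Proof.
  unfold in_interval; destruct la, rb;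
  repeat destruct (Rle_dec _ _); repeat destruct (Rlt_dec _ _); simpl; intros; try discriminate; lra.
Qed.

Lemma inint2 a b la rb y : a < y < b -> in_interval a b la rb y = true.
Proof.
  unfold in_interval; destruct la, rb;
  repeat destruct (Rle_dec _ _); repeat destruct (Rlt_dec _ _); simpl; intros; auto; lra.
Qed.

Lemma rec_formula N F x :
  (forall k : nat, (1 <= k)%nat -> (k <= N - 1)%nat -> fk x (S k) + F = fk x k) ->
  forall k, (1 <= k)%nat -> (k <= N)%nat -> fk x k = fk x N + (INR N - INR k) * F.
Proof.
  intros H. assert (forall m k, (1 <= k)%nat -> (k <= N)%nat -> (N - k = m)%nat ->
     fk x k = fk x N + (INR N - INR k) * F).
  { induction m; intros k h1 h2 h3.
    - assert (k = N) by lia. subst. ring.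
    - assert (IH := IHm (S k) ltac:(lia) ltac:(lia) ltac:(lia)).
      rewrite <- (H k h1 ltac:(lia)), IH, S_INR. ring. }
  intros k h1 h2. apply (H0 (N - k)%nat); auto.
Qed.

Lemma sum_upper (N : nat) (K : R) (x : nat -> R) : x 0%nat = 0 ->
  (forall i, (i < N)%nat -> K * (x i - x (S i)) * sqrt (INR N - INR i) <= 1) ->
  forall i, (i <= N)%nat -> K * (- x i) <= 2 * (sqrt (INR N) - sqrt (INR N - INR i)).
Proof.
  intros H0 H. induction i; intros Hi.
  - rewrite H0. simpl. rewrite Rminus_0_r. lra.
  - assert (IH := IHi ltac:(lia)). assert (Hm := H i ltac:(lia)).
    assert (Hlt : INR i + 1 <= INR N) by (rewrite <- S_INR; apply le_INR; lia).
    rewrite S_INR in *.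
    set (m := INR N - INR i) in *.
    replace (INR N - (INR i + 1)) with (m - 1) by (unfold m; ring).
    assert (ha := sqrt_lt_R0 m ltac:(unfold m; lra)).
    assert (ha2 := sqrt_sqrt m ltac:(unfold m; lra)).
    assert (hb := sqrt_pos (m - 1)).
    assert (hb2 := sqrt_sqrt (m - 1) ltac:(unfold m; lra)).
    set (a := sqrt m) in *. set (b := sqrt (m - 1)) in *.
    set (e := K * (x i - x (S i))) in *.
    assert (e <= 2 * (a - b)).
    { assert (2 * a * b <= a * a + b * b) by nra.
      assert (a * (2 * (a - b) - e) >= 0) by nra. nra. }
    unfold e in H1. nra.
Qed.

Lemma sum_lower (N : nat) (K : R) (x : nat -> R) : x 0%nat = 0 ->
  (forall i, (i < N)%nat -> 1 <= K * (x i - x (S i)) * sqrt (INR N - INR i)) ->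
  forall i, (i <= N)%nat -> 2 * (sqrt (INR N + 1) - sqrt (INR N + 1 - INR i)) <= K * (- x i).
Proof.
  intros H0 H. induction i; intros Hi.
  - rewrite H0. simpl. rewrite Rminus_0_r. lra.
  - assert (IH := IHi ltac:(lia)). assert (Hm := H i ltac:(lia)).
    assert (Hlt : INR i + 1 <= INR N) by (rewrite <- S_INR; apply le_INR; lia).
    rewrite S_INR in *.
    set (m := INR N - INR i) in *.
    replace (INR N + 1 - (INR i + 1)) with m by (unfold m; ring).
    replace (INR N + 1 - INR i) with (m + 1) in IH by (unfold m; ring).
    assert (ha := sqrt_lt_R0 m ltac:(unfold m; lra)).
    assert (ha2 := sqrt_sqrt m ltac:(unfold m; lra)).
    assert (hb := sqrt_pos (m + 1)).
    assert (hb2 := sqrt_sqrt (m + 1) ltac:(unfold m; lra)).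
    set (a := sqrt m) in *. set (b := sqrt (m + 1)) in *.
    set (e := K * (x i - x (S i))) in *.
    assert (2 * (b - a) <= e).
    { assert (2 * a * b <= a * a + b * b) by nra.
      assert (a * (e - 2 * (b - a)) >= 0) by nra. nra. }
    unfold e in H1. nra.
Qed.

Lemma fk_eq x i : x i - x (S i) <> 0 -> (x i - x (S i)) ^ 2 * fk x (S i) = 1.
Proof. intros h. unfold fk, delta. simpl Nat.pred. field. auto. Qed.

Lemma fp_bounds N L c x : (1 <= N)%nat -> 0 < c -> 2 / sqrt c < L ->
  is_fixed_point N L (c * INR N) x ->
  forall i, (i <= N)%nat ->
    sqrt (INR N - INR i) <= (1 + x i * sqrt c / 2) * sqrt (INR N) <= sqrt (INR N - INR i) + 1.
Proof.
  intros HN Hc HL [[Ha1 [Ha2 Ha3]] [H0 [Hrec Hend]]].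
  assert (Rf := rec_formula N _ x Hrec).
  assert (HNp : 1 <= INR N) by (apply (le_INR 1); lia).
  assert (hsc := sqrt_lt_R0 c Hc). assert (hsc2 := sqrt_sqrt c ltac:(lra)).
  assert (hsN := sqrt_lt_R0 (INR N) ltac:(lra)). assert (hsN2 := sqrt_sqrt (INR N) ltac:(lra)).
  set (sc := sqrt c) in *. set (sN := sqrt (INR N)) in *.
  set (K := sc * sN).
  assert (Kid : forall i, (i < N)%nat ->
     (K * (x i - x (S i)) * sqrt (INR N - INR i)) ^ 2 =
     c * INR N * (INR N - INR i) * (x i - x (S i)) ^ 2).
  { intros i Hi. assert (INR i + 1 <= INR N) by (rewrite <- S_INR; apply le_INR; lia).
    assert (h := sqrt_sqrt (INR N - INR i) ltac:(lra)).
    unfold K. replace ((sc * sN * (x i - x (S i)) * sqrt (INR N - INR i)) ^ 2) with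
      ((sc * sc) * (sN * sN) * (sqrt (INR N - INR i) * sqrt (INR N - INR i)) * (x i - x (S i)) ^ 2) by ring.
    rewrite hsc2, hsN2, h. ring. }
  assert (Fi : forall i, (i < N)%nat -> fk x (S i) = fk x N + (INR N - INR i - 1) * (c * INR N)).
  { intros i Hi. rewrite (Rf (S i) ltac:(lia) ltac:(lia)), S_INR. ring. }
  assert (Dpos : forall i, (i < N)%nat -> 0 < x i - x (S i)).
  { intros i Hi. specialize (Ha3 i Hi). lra. }
  assert (Pos : forall i, (i < N)%nat -> 0 <= K * (x i - x (S i)) * sqrt (INR N - INR i)).
  { intros i Hi. unfold K. assert (0 < x i - x (S i)) by auto.
    assert (0 <= sqrt (INR N - INR i)) by apply sqrt_pos.
    assert (0 < sc * sN) by nra. apply Rmult_le_pos; nra. }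
  destruct Hend as [[HxN HfN] | [HxN HfN]].
  - exfalso.
    assert (Up : forall i, (i < N)%nat -> K * (x i - x (S i)) * sqrt (INR N - INR i) <= 1).
    { intros i Hi. assert (E := fk_eq x i ltac:(specialize (Dpos i Hi); lra)).
      rewrite Fi in E by auto. assert (INR i + 1 <= INR N) by (rewrite <- S_INR; apply le_INR; lia).
      assert (P := Pos i Hi). assert (Q := Kid i Hi).
      set (z := K * (x i - x (S i)) * sqrt (INR N - INR i)) in *.
      set (d := (x i - x (S i)) ^ 2) in *.
      assert (0 <= d) by (unfold d; apply pow2_ge_0).
      assert (c * INR N * (INR N - INR i) * d <= 1).
      { assert (0 <= (fk x N - c * INR N) * d) by (apply Rmult_le_pos; lra). nra. }
      nra. }
    assert (S := sum_upper N K x H0 Up N (le_n _)).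
    rewrite Rminus_diag, sqrt_0, HxN in S. unfold K in S.
    fold sN in S. replace (- - L) with L in S by ring. assert (sN * (sc * L - 2) <= 0) by nra. assert (sc * L <= 2) by nra.
    assert (2 / sc * sc = 2) by (field; lra). nra.
  - assert (Eq : forall i, (i < N)%nat -> K * (x i - x (S i)) * sqrt (INR N - INR i) = 1).
    { intros i Hi. assert (E := fk_eq x i ltac:(specialize (Dpos i Hi); lra)).
      rewrite Fi, HfN in E by auto.
      assert (P := Pos i Hi). assert (Q := Kid i Hi).
      set (z := K * (x i - x (S i)) * sqrt (INR N - INR i)) in *.
      assert (z ^ 2 = 1) by (rewrite Q; rewrite <- E; ring). nra. }
    assert (Su := sum_upper N K x H0 ltac:(intros i Hi; rewrite (Eq i Hi); lra)).
    assert (Sl := sum_lower N K x H0 ltac:(intros i Hi; rewrite (Eq i Hi); lra)).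
    intros i Hi. specialize (Su i Hi). specialize (Sl i Hi).
    assert (Hii : INR i <= INR N) by (apply le_INR; lia).
    assert (hA := sqrt_pos (INR N - INR i)). assert (hA2 := sqrt_sqrt (INR N - INR i) ltac:(lra)).
    assert (hB := sqrt_pos (INR N + 1 - INR i)). assert (hB2 := sqrt_sqrt (INR N + 1 - INR i) ltac:(lra)).
    assert (hB' : sN <= sqrt (INR N + 1)) by (apply sqrt_le_1; lra).
    set (A := sqrt (INR N - INR i)) in *. set (B := sqrt (INR N + 1 - INR i)) in *.
    assert (Ev : (1 + x i * sc / 2) * sN = sN - K * (- x i) / 2) by (unfold K; simpl; field).
    rewrite Ev. assert ((B - (A + 1)) * (B + (A + 1)) <= 0) by nra. assert (B <= A + 1) by (destruct (Rle_dec B (A+1)); [auto| assert (0 < (B - (A + 1)) * (B + (A + 1))) by (apply Rmult_lt_0_compat; lra); lra]). fold sN in Su. split; lra.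
Qed.
From Coquelicot Require Import Coquelicot.
Open Scope R_scope.

Definition wf (c t : R) := Rmax 0 (1 + t * sqrt c / 2).
Definition Psi (c t : R) := 1 - (wf c t) ^ 2.
Definition rho0 (c t : R) := sqrt c * wf c t.

Lemma wf_pos c t : 0 <= 1 + t * sqrt c / 2 -> wf c t = 1 + t * sqrt c / 2.
Proof. intros; unfold wf; apply Rmax_right; auto. Qed.
Lemma wf_neg c t : 1 + t * sqrt c / 2 <= 0 -> wf c t = 0.
Proof. intros; unfold wf; apply Rmax_left; auto. Qed.

Lemma int_poly c a b : 0 < c -> 0 <= 1 + a * sqrt c / 2 -> a <= b ->
  is_RInt (rho0 c) a b (Psi c a - Psi c b).
Proof.
  intros Hc Ha Hab. assert (hsc := sqrt_lt_R0 c Hc).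
  assert (Hb : 0 <= 1 + b * sqrt c / 2) by nra.
  assert (h := is_RInt_derive (fun t => (1 + t * sqrt c / 2) ^ 2)
      (fun t => sqrt c * (1 + t * sqrt c / 2)) a b
      ltac:(intros; auto_derive; [auto| simpl; field])
      ltac:(intros; apply (@ex_derive_continuous R_AbsRing R_NormedModule); auto_derive; auto)).
  unfold Psi. rewrite (wf_pos c a Ha), (wf_pos c b Hb).
  replace (1 - (1 + a * sqrt c / 2) ^ 2 - (1 - (1 + b * sqrt c / 2) ^ 2)) with
     (minus ((1 + b * sqrt c / 2) ^ 2) ((1 + a * sqrt c / 2) ^ 2))
     by (unfold minus, plus, opp; simpl; ring).
  eapply is_RInt_ext; [|exact h]. intros x [h1 h2].
  rewrite Rmin_left in h1 by lra. rewrite Rmax_right in h2 by lra.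
  unfold rho0. rewrite wf_pos; auto. nra.
Qed.

Lemma int_zero c a b : 0 < c -> 1 + b * sqrt c / 2 <= 0 -> a <= b ->
  is_RInt (rho0 c) a b (Psi c a - Psi c b).
Proof.
  intros Hc Hb Hab. assert (hsc := sqrt_lt_R0 c Hc).
  assert (Ha : 1 + a * sqrt c / 2 <= 0) by nra.
  unfold Psi. rewrite (wf_neg c a Ha), (wf_neg c b Hb).
  assert (h := is_RInt_const a b 0).
  replace (1 - 0 ^ 2 - (1 - 0 ^ 2)) with (scal (b - a) 0)
    by (unfold scal; simpl; unfold mult; simpl; ring).
  eapply is_RInt_ext; [|exact h]. intros x [h1 h2].
  rewrite Rmin_left in h1 by lra. rewrite Rmax_right in h2 by lra.
  unfold rho0. rewrite wf_neg; [symmetry; apply Rmult_0_r | nra].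
Qed.

Lemma int_all c a b : 0 < c -> a <= b -> is_RInt (rho0 c) a b (Psi c a - Psi c b).
Proof.
  intros Hc Hab. assert (hsc := sqrt_lt_R0 c Hc).
  destruct (Rle_dec 0 (1 + a * sqrt c / 2)).
  - apply int_poly; auto.
  - destruct (Rle_dec (1 + b * sqrt c / 2) 0).
    + apply int_zero; auto.
    + set (r := - 2 / sqrt c).
      assert (Er : 1 + r * sqrt c / 2 = 0) by (unfold r; field; lra).
      assert (h1 := int_zero c a r Hc ltac:(lra) ltac:(unfold r; apply Rmult_le_reg_r with (sqrt c); auto; replace (- 2 / sqrt c * sqrt c) with (-2) by (field; lra); nra)).
      assert (h2 := int_poly c r b Hc ltac:(lra) ltac:(unfold r; apply Rmult_le_reg_r with (sqrt c); auto; replace (- 2 / sqrt c * sqrt c) with (-2) by (field; lra); nra)).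
      assert (h := is_RInt_Chasles _ _ _ _ _ _ h1 h2).
      replace (Psi c a - Psi c b) with (plus (Psi c a - Psi c r) (Psi c r - Psi c b))
        by (unfold plus; simpl; ring).
      exact h.
Qed.

Lemma riemann_val c a b : 0 < c -> a <= b ->
  exists pr : Riemann_integrable (rho0 c) a b, RiemannInt pr = Psi c a - Psi c b.
Proof.
  intros Hc Hab. assert (h := int_all c a b Hc Hab).
  exists (ex_RInt_Reals_0 _ _ _ (ex_intro _ _ h)).
  rewrite <- RInt_Reals. apply is_RInt_unique; auto.
Qed.

Lemma riemann_const (f : R -> R) C a b (pr : Riemann_integrable f a b) : a <= b ->
  (forall y, a <= y <= b -> f y = C) -> RiemannInt pr = C * (b - a).
Proof.
  intros Hab H. rewrite <- RInt_Reals.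
  rewrite (RInt_ext f (fun _ => C)).
  - rewrite RInt_const. change (scal ?x ?y) with (x * y). ring.
  - intros x [h1 h2]. rewrite Rmin_left in h1 by lra. rewrite Rmax_right in h2 by lra. apply H; lra.
Qed.

Lemma wf_ge0 c t : 0 <= wf c t.
Proof. unfold wf; apply Rmax_l. Qed.

Lemma wf_mono c t1 t2 : 0 < c -> t1 <= t2 -> wf c t1 <= wf c t2.
Proof.
  intros Hc H. assert (hsc := sqrt_lt_R0 c Hc). unfold wf, Rmax.
  repeat destruct (Rle_dec _ _); nra.
Qed.

Lemma Psi_mono c t1 t2 : 0 < c -> t1 <= t2 -> Psi c t2 <= Psi c t1.
Proof.
  intros Hc H. unfold Psi. assert (h := wf_mono c t1 t2 Hc H). assert (h0 := wf_ge0 c t1). nra.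
Qed.

Lemma Psi_range c t : 0 < c -> t <= 0 -> 0 <= Psi c t <= 1.
Proof.
  intros Hc H. assert (hsc := sqrt_lt_R0 c Hc). assert (h0 := wf_ge0 c t).
  assert (wf c t <= 1) by (unfold wf, Rmax; destruct (Rle_dec _ _); nra).
  unfold Psi. nra.
Qed.

Lemma psi_fp N L c x : (1 <= N)%nat -> 0 < c -> 2 / sqrt c < L ->
  is_fixed_point N L (c * INR N) x ->
  forall i, (i <= N)%nat ->
    INR i - 3 * sqrt (INR N) <= INR N * Psi c (x i) <= INR i.
Proof.
  intros HN Hc HL Hfp i Hi.
  assert (B := fp_bounds N L c x HN Hc HL Hfp i Hi).
  assert (HNp : 1 <= INR N) by (apply (le_INR 1); lia).
  assert (Hii : INR i <= INR N) by (apply le_INR; lia).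
  assert (hi0 := pos_INR i).
  assert (hsN := sqrt_lt_R0 (INR N) ltac:(lra)). assert (hsN2 := sqrt_sqrt (INR N) ltac:(lra)).
  assert (hA := sqrt_pos (INR N - INR i)). assert (hA2 := sqrt_sqrt (INR N - INR i) ltac:(lra)).
  assert (hsN1 : 1 <= sqrt (INR N)) by (rewrite <- sqrt_1; apply sqrt_le_1; lra).
  set (sN := sqrt (INR N)) in *. set (A := sqrt (INR N - INR i)) in *.
  set (v := 1 + x i * sqrt c / 2) in *.
  assert (v0 : 0 <= v) by nra.
  unfold Psi. rewrite (wf_pos c (x i) v0). fold v.
  assert (AsN : A <= sN) by nra.
  assert (E : INR N * (1 - v ^ 2) = INR N - (v * sN) ^ 2) by (rewrite <- hsN2 at 1 2; ring).
  rewrite E. set (z := v * sN) in *.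
  split; nra.
Qed.

Lemma count_bound N L c x a b la rb : (1 <= N)%nat -> 0 < c -> 2 / sqrt c < L ->
  is_fixed_point N L (c * INR N) x -> a <= b -> b <= 0 ->
  Rabs (count_in N x a b la rb - INR N * (Psi c a - Psi c b)) <= 3 * sqrt (INR N) + 1.
Proof.
  intros HN Hc HL Hfp Hab Hb.
  assert (P := psi_fp N L c x HN Hc HL Hfp).
  assert (HNp : 1 <= INR N) by (apply (le_INR 1); lia).
  assert (hsN := sqrt_lt_R0 (INR N) ltac:(lra)).
  assert (Ra := Psi_range c a Hc ltac:(lra)). assert (Rb := Psi_range c b Hc Hb).
  assert (Mab := Psi_mono c a b Hc Hab).
  change (count_in N x a b la rb) with (cnt N (fun i => in_interval a b la rb (x i))).
  assert (U := cntA (fun i => in_interval a b la rb (x i)) N (INR N * Psi c b)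
                (INR N * Psi c a + 3 * sqrt (INR N))).
  assert (Lo := cntB (fun i => in_interval a b la rb (x i)) N (INR N * Psi c b + 3 * sqrt (INR N))
                (INR N * Psi c a)).
  assert (U' : cnt N (fun i => in_interval a b la rb (x i)) <=
               Rmax 0 (INR N * Psi c a + 3 * sqrt (INR N) - INR N * Psi c b + 1)).
  { apply U. intros i Hi G. apply inint1 in G. specialize (P i Hi).
    assert (h1 := Psi_mono c a (x i) Hc ltac:(lra)).
    assert (h2 := Psi_mono c (x i) b Hc ltac:(lra)).
    split; nra. }
  assert (L' : Rmin (INR N * Psi c a - 1) (INR N) - (INR N * Psi c b + 3 * sqrt (INR N)) <=
               cnt N (fun i => in_interval a b la rb (x i))).
  { apply Lo. nra. intros i Hi [h1 h2]. apply inint2. specialize (P i Hi). split.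
    - destruct (Rlt_dec a (x i)); auto. assert (h := Psi_mono c (x i) a Hc ltac:(lra)). nra.
    - destruct (Rlt_dec (x i) b); auto. assert (h := Psi_mono c b (x i) Hc ltac:(lra)). nra. }
  rewrite Rmax_right in U' by nra. rewrite Rmin_left in L' by nra.
  apply Rabs_le. split; lra.
Qed.

Lemma ev_small M eps : 0 < M -> 0 < eps ->
  exists N0, forall n, (N0 <= n)%nat -> (1 <= n)%nat /\ M / sqrt (INR n) < eps.
Proof.
  intros HM He. destruct (archimed_cor1 ((eps / M) ^ 2) ltac:(apply pow_lt; apply Rdiv_lt_0_compat; lra))
    as [N0 [h1 h2]].
  exists N0. intros n Hn. split; [lia|].
  assert (H0 : 0 < INR N0) by (apply lt_0_INR; lia).
  assert (Hn' : INR N0 <= INR n) by (apply le_INR; lia).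
  assert (hs := sqrt_lt_R0 (INR n) ltac:(lra)). assert (hs2 := sqrt_sqrt (INR n) ltac:(lra)).
  set (s := sqrt (INR n)) in *.
  assert (1 < (eps / M) ^ 2 * INR N0).
  { apply Rmult_lt_compat_r with (r := INR N0) in h1; auto. rewrite Rinv_l in h1; lra. }
  assert (1 < (eps / M) ^ 2 * INR n) by (assert (0 <= (eps/M)^2) by apply pow2_ge_0; nra).
  assert (E : (eps / M) ^ 2 * INR n = (eps * s / M) ^ 2) by (rewrite <- hs2; field; lra).
  rewrite E in H1.
  assert (1 < eps * s / M).
  { assert (0 < eps * s / M) by (apply Rdiv_lt_0_compat; nra). nra. }
  apply Rmult_lt_reg_r with (r := s); auto.
  replace (M / s * s) with M by (field; lra).
  assert (eps * s / M * M = eps * s) by (field; lra). nra.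
Qed.

Lemma count_conv L c xs a b la rb : 0 < c -> 2 / sqrt c < L ->
  (forall N : nat, (1 <= N)%nat -> is_fixed_point N L (c * INR N) (xs N)) ->
  a <= b -> b <= 0 ->
  Un_cv (fun N => count_in N (xs N) a b la rb / INR N) (Psi c a - Psi c b).
Proof.
  intros Hc HL Hfp Hab Hb eps He.
  destruct (ev_small 4 eps ltac:(lra) He) as [N0 HN0].
  exists N0. intros n Hn. destruct (HN0 n ltac:(lia)) as [h1 h2].
  assert (B := count_bound n L c (xs n) a b la rb h1 Hc HL (Hfp n h1) Hab Hb).
  assert (HNp : 1 <= INR n) by (apply (le_INR 1); lia).
  assert (hs := sqrt_lt_R0 (INR n) ltac:(lra)). assert (hs2 := sqrt_sqrt (INR n) ltac:(lra)).
  assert (hsN1 : 1 <= sqrt (INR n)) by (rewrite <- sqrt_1; apply sqrt_le_1; lra).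
  set (s := sqrt (INR n)) in *.
  unfold R_dist.
  replace (count_in n (xs n) a b la rb / INR n - (Psi c a - Psi c b)) with
    ((count_in n (xs n) a b la rb - INR n * (Psi c a - Psi c b)) / INR n) by (field; lra).
  rewrite Rabs_div by lra. rewrite (Rabs_right (INR n)) by lra.
  apply Rle_lt_trans with ((3 * s + 1) / INR n).
  { apply Rmult_le_compat_r; auto. left; apply Rinv_0_lt_compat; lra. }
  apply Rle_lt_trans with (4 / s); auto.
  rewrite <- hs2. apply Rmult_le_reg_r with (r := s * s); [nra|].
  replace ((3 * s + 1) / (s * s) * (s * s)) with (3 * s + 1) by (field; lra).
  replace (4 / s * (s * s)) with (4 * s) by (field; lra). lra.
Qed.

Theorem theorem2 (L c : R) (xs : nat -> nat -> R) :
  0 < L ->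
  c > 4 / L ^ 2 ->
  (forall N : nat, (1 <= N)%nat -> is_fixed_point N L (c * INR N) (xs N)) ->
  (exists N0 : nat, forall N : nat, (N0 <= N)%nat -> xs N N > -L) /\
  Un_cv (fun N => xs N N) (- (2 / sqrt c)) /\
  (exists rho : R -> R,
     is_density L xs rho /\
     (forall y : R, -L <= y < - (2 / sqrt c) -> rho y = 0)) /\
  (forall rho : R -> R, is_density L xs rho ->
     ~ (exists C : R, forall y : R, - (2 / sqrt c) < y < 0 -> rho y = C)).
Proof.
  intros HL Hc4 Hfp.
  assert (Hc : 0 < c) by (assert (0 < 4 / L ^ 2) by (apply Rdiv_lt_0_compat; [lra| apply pow_lt; lra]); lra).
  assert (hsc := sqrt_lt_R0 c Hc). assert (hsc2 := sqrt_sqrt c ltac:(lra)).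
  set (sc := sqrt c) in *.
  assert (HR : 2 / sc < L).
  { assert (c * L ^ 2 > 4).
    { apply Rmult_gt_compat_r with (r := L ^ 2) in Hc4; [|apply pow_lt; lra].
      replace (4 / L ^ 2 * L ^ 2) with 4 in Hc4 by (field; lra). lra. }
    assert ((sc * L) ^ 2 > 4) by (replace ((sc * L) ^ 2) with (sc * sc * L ^ 2) by ring; rewrite hsc2; lra).
    assert (0 < sc * L) by (apply Rmult_lt_0_compat; lra). assert (sc * L > 2) by nra.
    apply Rmult_lt_reg_r with (r := sc); auto. replace (2 / sc * sc) with 2 by (field; lra). lra. }
  assert (xN : forall N, (1 <= N)%nat -> 0 <= 1 + xs N N * sc / 2 <= 1 / sqrt (INR N)).
  { intros N HN. assert (B := fp_bounds N L c (xs N) HN Hc HR (Hfp N HN) N (le_n _)).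
    rewrite Rminus_diag, sqrt_0 in B.
    assert (HNp : 1 <= INR N) by (apply (le_INR 1); lia).
    assert (hs := sqrt_lt_R0 (INR N) ltac:(lra)).
    fold sc in B. set (v := 1 + xs N N * sc / 2) in *. split.
    - nra.
    - apply Rmult_le_reg_r with (r := sqrt (INR N)); auto.
      replace (1 / sqrt (INR N) * sqrt (INR N)) with 1 by (field; lra). lra. }
  split; [|split; [|split]].
  - exists 1%nat. intros N HN. destruct (xN N HN) as [h _].
    assert (xs N N >= - (2 / sc)).
    { replace (- (2 / sc)) with ((0 - 1) * 2 / sc) by (field; lra).
      apply Rle_ge. apply Rmult_le_reg_r with (r := sc / 2); [lra|].
      replace ((0 - 1) * 2 / sc * (sc / 2)) with (-1) by (field; lra). nra. }
    lra.
  - intros eps He.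
    destruct (ev_small (2 / sc) eps ltac:(apply Rdiv_lt_0_compat; lra) He) as [N0 HN0].
    exists N0. intros n Hn. destruct (HN0 n Hn) as [h1 h2]. destruct (xN n h1) as [v1 v2].
    unfold R_dist.
    replace (xs n n - - (2 / sc)) with ((1 + xs n n * sc / 2) * (2 / sc)) by (field; lra).
    assert (0 < 2 / sc) by (apply Rdiv_lt_0_compat; lra).
    rewrite Rabs_right by nra.
    apply Rle_lt_trans with (1 / sqrt (INR n) * (2 / sc)). nra.
    replace (1 / sqrt (INR n) * (2 / sc)) with (2 / sc / sqrt (INR n)); auto.
    assert (0 < sqrt (INR n)) by (apply sqrt_lt_R0; apply (lt_INR 0); lia). field; lra.
  - exists (rho0 c). split.
    + intros a b Ha Hab Hb. destruct (riemann_val c a b Hc ltac:(lra)) as [pr Hpr].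
      exists pr. intros la rb. rewrite Hpr. apply (count_conv L); auto; lra.
    + intros y [h1 h2]. unfold rho0. rewrite wf_neg. ring.
      fold sc. apply Rmult_lt_compat_r with (r := sc / 2) in h2; [|lra].
      replace (- (2 / sc) * (sc / 2)) with (-1) in h2 by (field; lra). nra.
  - intros rho Hd [C HC].
    set (p1 := - (3 / (2 * sc))). set (p2 := - (1 / sc)). set (p3 := - (1 / (2 * sc))).
    assert (W1 : Psi c p1 = 15 / 16).
    { unfold Psi. rewrite wf_pos; fold sc; unfold p1; [field; lra|].
      replace (1 + - (3 / (2 * sc)) * sc / 2) with (1/4) by (field; lra). lra. }
    assert (W2 : Psi c p2 = 3 / 4).
    { unfold Psi. rewrite wf_pos; fold sc; unfold p2; [field; lra|].
      replace (1 + - (1 / sc) * sc / 2) with (1/2) by (field; lra). lra. }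
    assert (W3 : Psi c p3 = 7 / 16).
    { unfold Psi. rewrite wf_pos; fold sc; unfold p3; [field; lra|].
      replace (1 + - (1 / (2 * sc)) * sc / 2) with (3/4) by (field; lra). lra. }
    assert (O1 : - (2 / sc) < p1) by (unfold p1; apply Ropp_lt_contravar;
       apply Rmult_lt_reg_r with (r := sc); auto;
       replace (3 / (2 * sc) * sc) with (3/2) by (field; lra); replace (2 / sc * sc) with 2 by (field; lra); lra).
    assert (O12 : p2 - p1 = 1 / (2 * sc)) by (unfold p1, p2; field; lra).
    assert (O23 : p3 - p2 = 1 / (2 * sc)) by (unfold p3, p2; field; lra).
    assert (O3 : p3 < 0) by (unfold p3; assert (0 < 1 / (2 * sc)) by (apply Rdiv_lt_0_compat; lra); lra).
    assert (Hq : 0 < 1 / (2 * sc)) by (apply Rdiv_lt_0_compat; lra).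
    assert (key : forall a b, - (2 / sc) < a -> a < b -> b < 0 -> C * (b - a) = Psi c a - Psi c b).
    { intros a b h1 h2 h3.
      destruct (Hd a b ltac:(lra) h2 ltac:(lra)) as [pr Hpr].
      specialize (Hpr true true).
      assert (Hc2 := count_conv L c xs a b true true Hc HR Hfp ltac:(lra) ltac:(lra)).
      rewrite <- (UL_sequence _ _ _ Hpr Hc2).
      symmetry; apply riemann_const; [lra|]. intros y hy. apply HC. lra. }
    assert (K1 := key p1 p2 O1 ltac:(lra) ltac:(lra)).
    assert (K2 := key p2 p3 ltac:(lra) ltac:(lra) O3).
    rewrite O12, W1, W2 in K1. rewrite O23, W2, W3 in K2. lra.
Qed.
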